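(* Let $F:\mathbb{R}\to\mathbb{R}$ and $G:\mathbb{R}\to(0,\infty)$ be measurable functions and fix a timestep $\Delta t>0$. Define the Euler–Maruyama transition density $$P(\xi\mid x)=\frac{1}{G(x)\sqrt{2\pi\Delta t}}\exp\!\left(\frac{-[\xi-x-F(x)\Delta t]^2}{2G(x)^2\Delta t}\right),\qquad \xi,x\in\mathbb{R},$$ i.e. the density of $\xi=x+F(x)\Delta t+G(x)\eta\sqrt{\Delta t}$ with $\eta\sim N(0,1)$. Suppose $\rho^*$ is a probability density on $\mathbb{R}$ which is an equilibrium of this step, i.e. $$\rho^*(\xi)=\int_{-\infty}^{\infty}P(\xi\mid x)\,\rho^*(x)\,dx\quad\text{for all }\xi\in\mathbb{R},$$ and suppose its second raw moment $\mu_2=\int_{-\infty}^{\infty}x^2\rho^*(x)\,dx$ is finite. Then $$0=\Delta t\int_{-\infty}^{\infty}\rho^*(x)\left[2xF(x)+G(x)^2\right]dx+\Delta t^2\int_{-\infty}^{\infty}\rho^*(x)\,F(x)^2\,dx .$$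
   Context: This is the Euler–Maruyama discretization with timestep $\Delta t$ of the autonomous Itô SDE $dx=F(x)\,dt+G(x)\,dW$; the equilibrium $\rho^*$ is a density left unchanged by one step of this discretization. *)

(* Defs.v *)
From HB Require Import structures.
From mathcomp Require Import all_boot all_order all_algebra.
From mathcomp Require Import all_classical all_reals all_analysis.
Set Implicit Arguments. Unset Strict Implicit. Unset Printing Implicit Defensive.
Import Order.TTheory GRing.Theory Num.Theory.
Local Open Scope ring_scope.

Definition EM_density (R : realType) (F G : R -> R) (dt : R) (xi x : R) : R :=
  (G x * Num.sqrt (2 * pi * dt))^-1 *
  expR (- (xi - x - F x * dt) ^+ 2 / (2 * G x ^+ 2 * dt)).

(* Main.v *)
Require Import Defs.
From HB Require Import structures.
From mathcomp Require Import all_boot all_order all_algebra.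
From mathcomp Require Import all_classical all_reals all_analysis.
From mathcomp Require Import measurable_realfun.
From mathcomp Require Import ring lra.
Import Order.TTheory GRing.Theory Num.Theory.
Import numFieldNormedType.Exports.
Local Open Scope ring_scope.
Local Open Scope classical_set_scope.

Section G.
Context {R : realType}.
Variables (m s : R).
Hypothesis s0 : 0 < s.
Let q := normal_fun m s.
Let c := m ^+ 2 + s ^+ 2.
Let h (x : R) := - s ^+ 2 * ((x + m) * q x).
Let g (x : R) := x ^+ 2 * q x - c * q x.
Let sn : s != 0. Proof. by rewrite gt_eqF. Qed.
Local Notation mu := (@lebesgue_measure R).

Let dq (x : R) : is_derive x (1:R) q (- (x - m) / s ^+ 2 * q x).
Proof.
rewrite /q /normal_fun.
have -> : (fun x => expR (- (x - m) ^+ 2 / (s ^+ 2 *+ 2))) = expR \o (fun x => - (x - m) ^+ 2 / (s ^+ 2 *+ 2)) by [].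
apply: is_derive_eq.
rewrite !scaler0 !subr0 add0r /GRing.scale /=.
by field.
Qed.

Let dh (x : R) : is_derive x (1:R) h (g x).
Proof.
have dq' := dq x.
rewrite /h; apply: is_derive_eq.
rewrite /g /c /GRing.scale /=.
by field.
Qed.

Let cq : continuous q.
Proof.
move=> x; apply: differentiable_continuous; apply/derivable1_diffP.
by case: (dq x).
Qed.

Let ch : continuous h.
Proof.
move=> x; apply: differentiable_continuous; apply/derivable1_diffP.
by case: (dh x).
Qed.

Let cg : continuous g.
Proof.
move=> x; rewrite /g.
apply: cvgB; apply: cvgM.
- apply: (cvg_comp (fun z => z) (fun z => z ^+ 2)); first exact: cvg_id.
  exact: exprn_continuous.
- exact: cq.
- exact: cvg_cst.
- exact: cq.
Qed.

Let mq : measurable_fun setT q.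
Proof. exact: measurable_normal_fun. Qed.

Let FTC (a b : R) : a < b ->
  (\int[mu]_(x in `[a, b]) (x ^+ 2 * q x)%:E =
   c%:E * \int[mu]_(x in `[a, b]) (q x)%:E + (h b - h a)%:E)%E.
Proof.
move=> ab.
have iq : mu.-integrable `[a, b] (EFin \o q).
  apply: continuous_compact_integrable; first exact: segment_compact.
  exact: continuous_subspaceT.
have ig : mu.-integrable `[a, b] (EFin \o g).
  apply: continuous_compact_integrable; first exact: segment_compact.
  exact: continuous_subspaceT.
have icq : mu.-integrable `[a, b] (fun x => (c%:E * (q x)%:E)%E).
  exact: integrableZl.
transitivity (\int[mu]_(x in `[a, b]) ((g x)%:E + (c%:E * (q x)%:E)))%E.
  by apply: eq_integral => x _; rewrite -EFinM -EFinD /g subrK.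
rewrite integralD //= integralZl //.
rewrite (@continuous_FTC2 _ g h a b ab).
- by rewrite addeC EFinB.
- exact: continuous_subspaceT.
- split.
  + by move=> x _; case: (dh x).
  + exact: cvg_at_right_filter (ch a).
  + exact: cvg_at_left_filter (ch b).
- move=> x _; rewrite derive1E.
  by case: (dh x).
Qed.

Let K := s ^+ 2 *+ 2.
Let Kgt0 : 0 < K. Proof. by rewrite /K pmulrn_lgt0 // exprn_gt0. Qed.

Let hA (b : R) : h (m + b) - h (m - b) = - K * (b * expR (- b ^+ 2 / K)).
Proof.
rewrite /h /q /normal_fun -/K.
have -> : m + b - m = b by ring.
have -> : m - b - m = - b by ring.
rewrite sqrrN /K; ring.
Qed.

Let bnd (b : R) : 0 < b -> 0 <= b * expR (- b ^+ 2 / K) <= K * b^-1.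
Proof.
move=> b0; apply/andP; split; first by rewrite mulr_ge0 ?expR_ge0 ?ltW.
rewrite mulNr.
set y := b ^+ 2 / K.
have y0 : 0 <= y by rewrite /y divr_ge0 ?sqr_ge0 ?ltW.
have Ey : 1 + y <= expR y by exact: expR_ge1Dx.
have E0 : 0 < expR y by exact: expR_gt0.
have yK : y * K = b ^+ 2 by rewrite /y divfK // gt_eqF.
rewrite expRN.
set u := (expR y)^-1. set v := b^-1.
have Eu : expR y * u = 1 by rewrite /u divff // gt_eqF.
have bv : b * v = 1 by rewrite /v divff // gt_eqF.
have u0 : 0 <= u by rewrite /u invr_ge0 ltW.
have v0 : 0 <= v by rewrite /v invr_ge0 ltW.
have key : b * u - K * v = (b ^+ 2 - K * expR y) * (u * v).
  have -> : b ^+ 2 - K * expR y = b * b - K * expR y by rewrite expr2.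
  transitivity (b * u * (b * v) - K * v * (expR y * u)); first by rewrite bv Eu !mulr1.
  ring.
have : (b ^+ 2 - K * expR y) * (u * v) <= 0.
  apply: mulr_le0_ge0; last exact: mulr_ge0.
  rewrite -yK subr_le0 mulrC ler_pM2l //.
  lra.
rewrite -key; lra.
Qed.

Let hlim : (fun n : nat => h (m + n.+1%:R) - h (m - n.+1%:R)) @ \oo --> (0:R).
Proof.
have -> : (0:R) = - K * 0 by rewrite mulr0.
under eq_fun do rewrite hA.
apply: cvgMl_tmp.
apply: (@squeeze_cvgr _ _ _ _ (fun=> 0) (fun n => K * harmonic n)).
- apply: nearW => n; rewrite /harmonic /=.
  exact: bnd.
- exact: cvg_cst.
- have -> : (0:R) = K * 0 by rewrite mulr0.
  apply: cvgMl_tmp; exact: cvg_harmonic.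
Qed.


Let k := normal_peak s.
Let k0 : 0 < k. Proof. exact: normal_peak_gt0. Qed.

Let pdfE x : normal_pdf m s x = k * q x.
Proof. by rewrite /normal_pdf (negbTE sn). Qed.

Let Iq : (\int[mu]_x (q x)%:E = k^-1%:E)%E.
Proof.
have := integral_normal_pdf m s.
under eq_integral do rewrite pdfE EFinM.
rewrite ge0_integralZl //; last 3 first.
- exact/measurable_EFinP.
- by move=> x _; rewrite lee_fin normal_fun_ge0.
- by rewrite lee_fin ltW.
have : (0 <= \int[mu]_x (q x)%:E)%E.
  by apply: integral_ge0 => x _; rewrite lee_fin normal_fun_ge0.
case: (\int[mu]_x (q x)%:E)%E => [r | | ] //.
- move=> _ /eqP; rewrite -EFinM eqe => /eqP kr.
  congr EFin; have -> : r = k^-1 * (k * r) by rewrite mulKf // gt_eqF.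
  by rewrite kr mulr1.
- by move=> _; rewrite gt0_muley ?lte_fin.
Qed.

Let A (n : nat) : set R := `[m - n.+1%:R, m + n.+1%:R].

Let ndA : {homo A : n1 n2 / (n1 <= n2)%N >-> (n1 <= n2)%O}.
Proof.
move=> n1 n2 le12; rewrite subsetEset => x; rewrite /A /= !in_itv /= => /andP[h1 h2].
have : (n1.+1%:R <= n2.+1%:R :> R) by rewrite ler_nat ltnS.
move=> hn; apply/andP; split; lra.
Qed.

Let mA n : measurable (A n). Proof. exact: measurable_itv. Qed.

Let UA : \bigcup_n A n = setT.
Proof.
apply/seteqP; split => // x _.
have /archi_boundP : 0 <= `|x - m| by [].
set N := Num.Def.archi_bound _ => hN.
exists N => //; rewrite /A /= in_itv /=.
have : (N%:R <= N.+1%:R :> R) by rewrite ler_nat.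
move: hN; rewrite ltr_norml => /andP[h1 h2] h3.
apply/andP; split; lra.
Qed.

Let mx2q : measurable_fun setT (fun x : R => x ^+ 2 * q x).
Proof. by apply: measurable_funM => //; exact: measurable_funX. Qed.

Let Lx2q : (\int[mu]_x (x ^+ 2 * q x)%:E = (c * k^-1)%:E)%E.
Proof.
have cvJ := @ge0_nondecreasing_set_cvg_integral _ (measurableTypeR R) R A (fun x => (x ^+ 2 * q x)%:E) mu ndA mA
  (fun n => ltac:(apply: measurable_funTS; exact/measurable_EFinP))
  (fun n x _ => ltac:(by rewrite lee_fin mulr_ge0 ?sqr_ge0 ?normal_fun_ge0)).
have cvI := @ge0_nondecreasing_set_cvg_integral _ (measurableTypeR R) R A (fun x => (q x)%:E) mu ndA mA
  (fun n => ltac:(apply: measurable_funTS; exact/measurable_EFinP))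
  (fun n x _ => ltac:(by rewrite lee_fin normal_fun_ge0)).
rewrite UA in cvJ cvI; rewrite Iq in cvI.
have cv2 : (\int[mu]_(x in A n) (x ^+ 2 * q x)%:E)%E @[n --> \oo] --> (c * k^-1)%:E.
  have E n : (\int[mu]_(x in A n) (x ^+ 2 * q x)%:E = c%:E * \int[mu]_(x in A n) (q x)%:E
     + (h (m + n.+1%:R) - h (m - n.+1%:R))%:E)%E.
    rewrite /A FTC //.
    have : (0:R) < n.+1%:R by rewrite ltr0Sn.
    lra.
  have -> : (fun n => \int[mu]_(x in A n) (x ^+ 2 * q x)%:E)%E = (fun n => c%:E * \int[mu]_(x in A n) (q x)%:E
     + (h (m + n.+1%:R) - h (m - n.+1%:R))%:E)%E by apply/funext => n; exact: E.
  rewrite -[X in _ --> X]adde0 EFinM.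
  apply: cvgeD => //.
  - exact: cvgeZl.
  - apply: cvg_EFin; first exact: nearW.
    exact: hlim.
exact: (cvg_unique _ cvJ cv2).
Qed.

Lemma gauss_m2 : (\int[mu]_x (x ^+ 2 * normal_pdf m s x)%:E = c%:E)%E.
Proof.
under eq_integral do rewrite pdfE mulrCA EFinM.
rewrite ge0_integralZl //; last 3 first.
- exact/measurable_EFinP.
- by move=> x _; rewrite lee_fin mulr_ge0 ?sqr_ge0 ?normal_fun_ge0.
- by rewrite lee_fin ltW.
by rewrite Lx2q -EFinM mulrCA mulfV ?gt_eqF // mulr1.
Qed.

End G.

Section H.
Context {R : realType}.

Lemma measurable_inv_pos d (T : measurableType d) (f : T -> R) :
  measurable_fun setT f -> (forall x, 0 < f x) -> measurable_fun setT (fun x => (f x)^-1).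
Proof.
move=> mf f0.
have -> : (fun x => (f x)^-1) = (fun x => powR (f x) (-1)).
  by apply/funext => x; rewrite powRN powRr1 // ltW.
exact: measurableT_comp (measurable_powR _) mf.
Qed.

Lemma mEM (F G : R -> R) dt d (T : measurableType d) (u v : T -> R) :
  measurable_fun setT F -> measurable_fun setT G -> (forall x, 0 < G x) -> 0 < dt ->
  measurable_fun setT u -> measurable_fun setT v ->
  measurable_fun setT (fun z => EM_density F G dt (u z) (v z)).
Proof.
move=> mF mG G0 dt0 mu mv.
rewrite /EM_density.
have mGv : measurable_fun setT (G \o v) by exact: measurableT_comp.
have mFv : measurable_fun setT (F \o v) by exact: measurableT_comp.
apply: measurable_funM.
  apply: measurable_inv_pos.
    by apply: measurable_funM.
  by move=> z; rewrite mulr_gt0 // sqrtr_gt0 mulr_gt0 // mulr_gt0 // pi_gt0.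
apply: measurableT_comp => //.
apply: measurable_funM.
  apply: measurableT_comp => //.
  apply: measurable_funX.
  apply: measurable_funB; [exact: measurable_funB | exact: measurable_funM].
apply: measurable_inv_pos.
  by apply: measurable_funM => //; apply: measurable_funM => //; apply: measurable_funX.
move=> z; rewrite mulr_gt0 // mulr_gt0 // exprn_gt0 //.
Qed.

Lemma EM_normal (F G : R -> R) dt (xi x : R) : 0 < G x -> 0 < dt ->
  EM_density F G dt xi x = normal_pdf (x + F x * dt) (G x * Num.sqrt dt) xi.
Proof.
move=> G0 dt0.
have s0 : G x * Num.sqrt dt != 0 by rewrite gt_eqF // mulr_gt0 // sqrtr_gt0.
rewrite /normal_pdf (negbTE s0) /EM_density /normal_peak /normal_fun.
have s2 : (G x * Num.sqrt dt) ^+ 2 = G x ^+ 2 * dt by rewrite exprMn sqr_sqrtr // ltW.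
rewrite s2.
congr (_^-1 * expR _).
  have -> : G x ^+ 2 * dt * pi *+ 2 = G x ^+ 2 * (2 * pi * dt) by rewrite -mulr_natr; ring.
  by rewrite [RHS]sqrtrM ?sqr_ge0 // sqrtr_sqr ger0_norm // ltW.
rewrite -mulr_natr; congr (- _ ^+ 2 / _); ring.
Qed.
End H.

Section I.
Context {R : realType}.
Local Notation mu := (@lebesgue_measure R).

Lemma ge0_intP (f : R -> R) : measurable_fun setT f -> (forall x, 0 <= f x) ->
  (\int[mu]_x (f x)%:E < +oo)%E -> mu.-integrable setT (EFin \o f).
Proof.
move=> mf f0 fi; apply/integrableP; split; first exact/measurable_EFinP.
apply: le_lt_trans fi; rewrite le_eqVlt; apply/orP; left; apply/eqP.
by apply: eq_integral => x _; rewrite /comp abse_EFin ger0_norm.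
Qed.

Lemma intZ k (f : R -> R) : mu.-integrable setT (EFin \o f) ->
  mu.-integrable setT (EFin \o (fun x => k * f x)).
Proof.
move=> fi; have -> : EFin \o (fun x => k * f x) = (fun x => (k%:E * (EFin \o f) x)%E).
  by apply/funext => x; rewrite /= EFinM.
exact: integrableZl.
Qed.

Lemma intD (f g : R -> R) : mu.-integrable setT (EFin \o f) -> mu.-integrable setT (EFin \o g) ->
  mu.-integrable setT (EFin \o (fun x => f x + g x)).
Proof.
move=> fi gi; have -> : EFin \o (fun x => f x + g x) = ((EFin \o f) \+ (EFin \o g))%E.
  by apply/funext => x; rewrite /= EFinD.
exact: integrableD.
Qed.

Lemma intB (f g : R -> R) : mu.-integrable setT (EFin \o f) -> mu.-integrable setT (EFin \o g) ->
  mu.-integrable setT (EFin \o (fun x => f x - g x)).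
Proof.
move=> fi gi; have -> : EFin \o (fun x => f x - g x) = ((EFin \o f) \- (EFin \o g))%E.
  by apply/funext => x; rewrite /= EFinB.
exact: integrableB.
Qed.

Lemma intE (f : R -> R) : mu.-integrable setT (EFin \o f) ->
  (\int[mu]_x (f x)%:E = (\int[mu]_x f x)%:E)%E.
Proof. by move=> fi; rewrite /Rintegral fineK //; exact: integrable_fin_num. Qed.

End I.

Theorem mainTheorem1 (R : realType) (F G : R -> R) (dt : R) (rho : R -> R) :
  measurable_fun [set: R] F ->
  measurable_fun [set: R] G ->
  (forall x, 0 < G x) ->
  0 < dt ->
  measurable_fun [set: R] rho ->
  (forall x, 0 <= rho x) ->
  (\int[@lebesgue_measure R]_(x in [set: R]) (rho x)%:E = 1)%E ->
  (forall xi : R,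
     (rho xi)%:E = \int[@lebesgue_measure R]_(x in [set: R]) (EM_density F G dt xi x * rho x)%:E)%E ->
  (\int[@lebesgue_measure R]_(x in [set: R]) (x ^+ 2 * rho x)%:E < +oo)%E ->
  (0 = dt%:E * \int[@lebesgue_measure R]_(x in [set: R]) (rho x * (2 * x * F x + G x ^+ 2))%:E
       + (dt ^+ 2)%:E * \int[@lebesgue_measure R]_(x in [set: R]) (rho x * F x ^+ 2)%:E)%E.
Proof.
move=> mF mG G0 dt0 mrho rho0 rho1 Hrho mu2.
have P0 xi x : 0 <= EM_density F G dt xi x by rewrite EM_normal // normal_pdf_ge0.
pose M x := (x + F x * dt) ^+ 2 + G x ^+ 2 * dt.
have mom x : (\int[@lebesgue_measure R]_xi (xi ^+ 2 * EM_density F G dt xi x)%:E = (M x)%:E)%E.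
  under eq_integral do rewrite EM_normal //.
  rewrite gauss_m2 ?mulr_gt0 ?sqrtr_gt0 //.
  by rewrite /M exprMn sqr_sqrtr // ltW.
have mprod : measurable_fun setT
    (fun z : R * R => (z.1 ^+ 2 * (EM_density F G dt z.1 z.2 * rho z.2))%:E).
  apply/measurable_EFinP; apply: measurable_funM.
    by apply: measurable_funX; exact: measurable_fst.
  apply: measurable_funM.
    by apply: mEM.
  exact: measurableT_comp mrho measurable_snd.
have key : (\int[@lebesgue_measure R]_x (x ^+ 2 * rho x)%:E
          = \int[@lebesgue_measure R]_x (rho x * M x)%:E)%E.
  transitivity (\int[@lebesgue_measure R]_xi \int[@lebesgue_measure R]_x
      (xi ^+ 2 * (EM_density F G dt xi x * rho x))%:E)%E.
    apply: eq_integral => xi _.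
    rewrite EFinM Hrho -ge0_integralZl //.
    - apply/measurable_EFinP; apply: measurable_funM => //.
      by apply: mEM.
    - by move=> x _; rewrite lee_fin mulr_ge0.
    - by rewrite lee_fin sqr_ge0.
  have FT := @fubini_tonelli _ _ _ _ R (@lebesgue_measure R) (@lebesgue_measure R)
    (fun z : R * R => (z.1 ^+ 2 * (EM_density F G dt z.1 z.2 * rho z.2))%:E) mprod
    (fun z => ltac:(by rewrite lee_fin; apply: mulr_ge0; [exact: sqr_ge0 | apply: mulr_ge0])).
  rewrite /= in FT; rewrite FT.
  apply: eq_integral => x _.
  transitivity (\int[@lebesgue_measure R]_xi ((rho x)%:E * (xi ^+ 2 * EM_density F G dt xi x)%:E))%E.
    by apply: eq_integral => xi _; rewrite -EFinM; congr EFin; ring.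
  rewrite ge0_integralZl //.
  - by rewrite mom -EFinM.
  - apply/measurable_EFinP; apply: measurable_funM => //.
    by apply: mEM.
  - by move=> xi _; rewrite lee_fin mulr_ge0 ?sqr_ge0.
  - by rewrite lee_fin.
pose a x := x ^+ 2 * rho x.
pose b x := rho x * (x + F x * dt) ^+ 2.
pose cc x := rho x * (G x ^+ 2 * dt).
pose e x := rho x * F x ^+ 2.
have ma : measurable_fun setT a by apply: measurable_funM => //; exact: measurable_funX.
have mb : measurable_fun setT b.
  apply: measurable_funM => //; apply: measurable_funX; apply: measurable_funD => //.
  exact: measurable_funM.
have mcc : measurable_fun setT cc.
  by apply: measurable_funM => //; apply: measurable_funM => //; exact: measurable_funX.
have me : measurable_fun setT e.
  by apply: measurable_funM => //; exact: measurable_funX.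
have a0 x : 0 <= a x by rewrite /a mulr_ge0 ?sqr_ge0.
have b0 x : 0 <= b x by rewrite /b mulr_ge0 ?sqr_ge0.
have cc0 x : 0 <= cc x by rewrite /cc mulr_ge0 // mulr_ge0 ?sqr_ge0 // ltW.
have e0 x : 0 <= e x by rewrite /e mulr_ge0 ?sqr_ge0.
have key' : (\int[@lebesgue_measure R]_x (a x)%:E
    = \int[@lebesgue_measure R]_x (b x)%:E + \int[@lebesgue_measure R]_x (cc x)%:E)%E.
  rewrite key -ge0_integralD //; last 4 first.
  - by move=> x _; rewrite lee_fin.
  - exact/measurable_EFinP.
  - by move=> x _; rewrite lee_fin.
  - exact/measurable_EFinP.
  by apply: eq_integral => x _; rewrite -EFinD /b /cc /M; congr EFin; ring.
have Ib0 : (0 <= \int[@lebesgue_measure R]_x (b x)%:E)%E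
  by apply: integral_ge0 => x _; rewrite lee_fin.
have Icc0 : (0 <= \int[@lebesgue_measure R]_x (cc x)%:E)%E
  by apply: integral_ge0 => x _; rewrite lee_fin.
have ia : (@lebesgue_measure R).-integrable setT (EFin \o a) by exact: ge0_intP.
have ib : (@lebesgue_measure R).-integrable setT (EFin \o b).
  apply: ge0_intP => //; apply: le_lt_trans mu2.
  by rewrite -/(a _) key' leeDl.
have icc : (@lebesgue_measure R).-integrable setT (EFin \o cc).
  apply: ge0_intP => //; apply: le_lt_trans mu2.
  by rewrite -/(a _) key' leeDr.
have ie : (@lebesgue_measure R).-integrable setT (EFin \o e).
  apply: ge0_intP => //.
  have ig := intZ (dt ^- 2 * 2) _ (intD _ _ ib ia).
  apply: (le_lt_trans _ (integrable_lty _ ig)) => //.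
  apply: ge0_le_integral => //.
  - by move=> x _; rewrite lee_fin.
  - exact/measurable_EFinP.
  - apply/measurable_EFinP; apply: measurable_funM => //; exact: measurable_funD.
  - move=> x _; rewrite /comp lee_fin /e /b /a.
    have h1 : 0 <= (2 * x + F x * dt) ^+ 2 by exact: sqr_ge0.
    have h2 : rho x * (F x ^+ 2 * dt ^+ 2) <= 2 * (rho x * (x + F x * dt) ^+ 2 + x ^+ 2 * rho x).
      have -> : 2 * (rho x * (x + F x * dt) ^+ 2 + x ^+ 2 * rho x)
        = rho x * (F x ^+ 2 * dt ^+ 2) + rho x * (2 * x + F x * dt) ^+ 2 by ring.
      by rewrite lerDl mulr_ge0.
    have dt2 : 0 < dt ^+ 2 by exact: exprn_gt0.
    have -> : rho x * F x ^+ 2 = dt ^- 2 * (rho x * (F x ^+ 2 * dt ^+ 2)).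
      by field; rewrite gt_eqF.
    rewrite -[X in _ <= X]mulrA; apply: ler_wpM2l => //.
    by rewrite invr_ge0 ltW.
have iba : (@lebesgue_measure R).-integrable setT (EFin \o (fun x => b x - a x)) by exact: intB.
have ibac : (@lebesgue_measure R).-integrable setT (EFin \o (fun x => (b x - a x) + cc x)) by exact: intD.
have iZ1 : (@lebesgue_measure R).-integrable setT (EFin \o (fun x => dt^-1 * ((b x - a x) + cc x))) by exact: intZ.
have iZ2 : (@lebesgue_measure R).-integrable setT (EFin \o (fun x => dt * e x)) by exact: intZ.
have iall : (@lebesgue_measure R).-integrable setT
    (EFin \o (fun x => dt^-1 * ((b x - a x) + cc x) - dt * e x)) by exact: intB.
have Rkey : (\int[@lebesgue_measure R]_x a x = \int[@lebesgue_measure R]_x b x + \int[@lebesgue_measure R]_x cc x)%R.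
  by move: key'; rewrite (intE _ ia) (intE _ ib) (intE _ icc) -EFinD => -[].
have I1 : (\int[@lebesgue_measure R]_x (rho x * (2 * x * F x + G x ^+ 2))%:E
   = (dt^-1 * ((\int[@lebesgue_measure R]_x b x - \int[@lebesgue_measure R]_x a x)
        + \int[@lebesgue_measure R]_x cc x) - dt * \int[@lebesgue_measure R]_x e x)%:E)%E.
  transitivity (\int[@lebesgue_measure R]_x (dt^-1 * ((b x - a x) + cc x) - dt * e x)%:E)%E.
    apply: eq_integral => x _; congr EFin; rewrite /a /b /cc /e.
    by field; rewrite gt_eqF.
  rewrite (intE _ iall); congr EFin.
  rewrite RintegralB // RintegralZl // RintegralZl // RintegralD // RintegralB //.
have I2 : (\int[@lebesgue_measure R]_x (rho x * F x ^+ 2)%:E = (\int[@lebesgue_measure R]_x e x)%:E)%E.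
  exact: intE ie.
rewrite I1 I2 -!EFinM -EFinD; congr EFin.
rewrite Rkey; field; by rewrite gt_eqF.
Qed.
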